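(* Let $A\in\mathbb{R}^{m\times n}$, $b\in\mathbb{R}^m$ and $\delta\ge 0$, and assume $\{x\in\mathbb{R}^n:\|Ax-b\|\le\delta\}\neq\emptyset$. Let $\mathcal{S}^*$ be the set of globally optimal solutions of $$\min_{x,v\in\mathbb{R}^n}\{\langle e,e-v\rangle:\ \|Ax-b\|\le\delta,\ \langle v,|x|\rangle=0,\ 0\le v\le e\},$$ and for $\rho>0$ let $\mathcal{S}^*_\rho$ be the set of globally optimal solutions of $$\min_{x,v\in\mathbb{R}^n}\{\langle e,e-v\rangle+\rho\langle v,|x|\rangle:\ \|Ax-b\|\le\delta,\ 0\le v\le e\}.$$ Then there exists a constant $\bar\rho>0$ such that $\mathcal{S}^*=\mathcal{S}^*_\rho$ for all $\rho>\bar\rho$.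
   Context: $\|\cdot\|$ is the Euclidean norm, $e\in\mathbb{R}^n$ is the all-ones vector, $|x|$ is the componentwise absolute value, and vector inequalities are componentwise. *)

(* Defs.v *)
From HB Require Import structures.
From mathcomp Require Import all_boot all_order all_algebra.
From mathcomp Require Import reals.
Set Implicit Arguments. Unset Strict Implicit. Unset Printing Implicit Defensive.
Import Order.TTheory GRing.Theory Num.Theory.
Local Open Scope ring_scope.

Section Defs.
Variable R : realType.

Definition dotv n (u v : 'cV[R]_n) : R := \sum_(i < n) u i 0 * v i 0.
Definition enorm n (u : 'cV[R]_n) : R := Num.sqrt (\sum_(i < n) u i 0 ^+ 2).
Definition absv n (x : 'cV[R]_n) : 'cV[R]_n := \col_i `|x i 0|.
Definition ones n : 'cV[R]_n := const_mx 1.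
Definition box01 n (v : 'cV[R]_n) : Prop := forall i, 0 <= v i 0 <= 1.

Definition feas m n (A : 'M[R]_(m, n)) (b : 'cV[R]_m) (delta : R)
  (x v : 'cV[R]_n) : Prop := enorm (A *m x - b) <= delta /\ box01 v.

Definition obj0 n (v : 'cV[R]_n) : R := dotv (ones n) (ones n - v).
Definition objpen n (rho : R) (x v : 'cV[R]_n) : R :=
  obj0 v + rho * dotv v (absv x).

Definition feasC m n A b delta (x v : 'cV[R]_n) : Prop :=
  @feas m n A b delta x v /\ dotv v (absv x) = 0.

Definition Sstar m n (A : 'M[R]_(m, n)) b delta (x v : 'cV[R]_n) : Prop :=
  feasC A b delta x v /\
  forall x' v' : 'cV[R]_n, feasC A b delta x' v' -> obj0 v <= obj0 v'.

Definition Sstar_rho m n (A : 'M[R]_(m, n)) b delta rho (x v : 'cV[R]_n)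
  : Prop :=
  feas A b delta x v /\
  forall x' v' : 'cV[R]_n, feas A b delta x' v' ->
    objpen rho x v <= objpen rho x' v'.
End Defs.

(* Main.v *)
Require Import Defs.
From HB Require Import structures.
From mathcomp Require Import all_boot all_order all_algebra.
From mathcomp Require Import reals.
From mathcomp Require Import ring lra.
From Stdlib Require Import Classical_Prop.
Import Order.TTheory GRing.Theory Num.Theory.
Set Implicit Arguments. Unset Strict Implicit.
Local Open Scope ring_scope.


Lemma nsq_ge0 (R : realType) m (u : 'cV[R]_m) : 0 <= dotv u u.
Proof. by apply: sumr_ge0 => i _; rewrite -expr2 sqr_ge0. Qed.

Lemma nsq_expand (R : realType) m (y a : 'cV[R]_m) t :
  dotv (y + t *: a) (y + t *: a) = dotv y y + 2*t*dotv a y + t^+2 * dotv a a.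
Proof.
rewrite /dotv !mulr_sumr -!big_split /=; apply: eq_bigr => i _; rewrite !mxE; ring.
Qed.

Lemma dot_div (R : realType) m (y a : 'cV[R]_m) :
  dotv a y / dotv a a * dotv a a = dotv a y.
Proof.
have [H|H] := eqVneq (dotv a a) 0; last by rewrite divfK.
have a0 : forall i, a i 0 = 0.
  move=> i; have := @psumr_eq0P R _ xpredT (fun i => a i 0 * a i 0).
  have h0 : forall j, xpredT j -> 0 <= a j 0 * a j 0.
    by move=> j _; rewrite -expr2 sqr_ge0.
  move=> /(_ h0 H i isT) /eqP; rewrite mulf_eq0 orbb => /eqP //.
rewrite H mulr0 /dotv big1 // => i _; by rewrite a0 mul0r.
Qed.

Lemma proj_id (R : realType) m (y a : 'cV[R]_m) t :
  dotv (y + t *: a) (y + t *: a) =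
  dotv (y - (dotv a y / dotv a a) *: a) (y - (dotv a y / dotv a a) *: a)
  + (t + dotv a y / dotv a a)^+2 * dotv a a.
Proof.
rewrite -scaleNr !nsq_expand.
have := dot_div y a. set s := dotv a y / dotv a a => h.
rewrite -h; ring.
Qed.

Definition Pj (R : realType) m (a y : 'cV[R]_m) := y - (dotv a y / dotv a a) *: a.

Lemma P_lin (R : realType) m k (a b : 'cV[R]_m) (s : 'I_k -> 'cV[R]_m) (c : 'I_k -> R) :
  Pj a (\sum_j c j *: s j - b) = \sum_j c j *: Pj a (s j) - Pj a b.
Proof.
apply/matrixP => i j; rewrite /Pj !mxE !summxE.
have -> : dotv a (\sum_j c j *: s j - b) = \sum_j c j * dotv a (s j) - dotv a b.
  rewrite /dotv.
  under eq_bigr do rewrite !mxE summxE mulrDr mulr_sumr.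
  rewrite big_split /= exchange_big /=.
  rewrite -sumrN; congr (_ + _).
    apply: eq_bigr => l _; rewrite mulr_sumr; apply: eq_bigr => q _; rewrite !mxE; ring.
  by apply: eq_bigr => q _; rewrite ?mxE; ring.
under eq_bigr do rewrite !mxE.
under [in RHS]eq_bigr do rewrite !mxE mulrBr.
rewrite sumrB.
have E : \sum_k0 c k0 * (dotv a (s k0) / dotv a a * a i j) =
   (\sum_j c j * dotv a (s j)) / dotv a a * a i j.
  by rewrite !mulr_suml; apply: eq_bigr => l _; ring.
rewrite E; ring.
Qed.

Definition nsq (R : realType) m (u : 'cV[R]_m) := dotv u u.

Lemma LS (R : realType) m k : forall (s : 'I_k -> 'cV[R]_m) (b : 'cV[R]_m),
  exists c0 : 'I_k -> R, forall c : 'I_k -> R,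
    nsq (\sum_j c0 j *: s j - b) <= nsq (\sum_j c j *: s j - b).
Proof.
elim: k => [|k IH] s b.
  by exists (fun _ => 0) => c; rewrite !big_ord0.
set a := s ord0.
have [c0' Hc0'] := IH (fun j => Pj a (s (lift ord0 j))) (Pj a b).
set y0 := \sum_j c0' j *: s (lift ord0 j) - b.
set t0 := - (dotv a y0 / dotv a a).
exists (fun j => match unlift ord0 j with Some i => c0' i | None => t0 end).
have split : forall c : 'I_k.+1 -> R,
  \sum_j c j *: s j - b = (\sum_j c (lift ord0 j) *: s (lift ord0 j) - b) + c ord0 *: a.
  by move=> c; rewrite big_ord_recl -addrA addrC.
move=> c; rewrite !split /nsq.
rewrite unlift_none.
under eq_bigr do rewrite liftK.
rewrite proj_id [X in _ <= X]proj_id -/y0 /t0 addNr expr0n /= mul0r addr0.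
have := Hc0' (fun j => c (lift ord0 j)).
rewrite /nsq -!P_lin /Pj -/y0 => H.
set Z := (_ ^+ 2 * _).
have : 0 <= Z by apply: mulr_ge0; [exact: sqr_ge0 | exact: nsq_ge0].
lra.
Qed.


Lemma term_le_sum (R : realType) k (F : 'I_k -> R) i :
  (forall j, 0 <= F j) -> F i <= \sum_j F j.
Proof.
move=> H; rewrite (bigD1 i) //=.
have : 0 <= \sum_(j | j != i) F j by apply: sumr_ge0.
lra.
Qed.

Lemma entry_le (R : realType) m (u : 'cV[R]_m) i : u i 0 ^+ 2 <= nsq u.
Proof.
rewrite /nsq /dotv; under eq_bigr do rewrite -expr2.
by apply: (@term_le_sum _ _ (fun j => u j 0 ^+ 2)) => j; exact: sqr_ge0.
Qed.

Lemma enorm_nsq (R : realType) m (u : 'cV[R]_m) (d : R) :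
  0 <= d -> (enorm u <= d) = (nsq u <= d ^+ 2).
Proof.
move=> d0; rewrite /enorm -/(dotv u u) -/(nsq u).
rewrite -(ler_sqrt (nsq u)); last by rewrite sqr_ge0.
by rewrite sqrtr_sqr ger0_norm.
Qed.

Lemma mask_mul (R : realType) m n (A : 'M[R]_(m, n)) (J : {set 'I_n}) (f : 'I_n -> R) :
  A *m (\col_j (if j \in J then f j else 0)) =
  \sum_j f j *: (if j \in J then col j A else 0).
Proof.
apply/matrixP => i k; rewrite !mxE summxE; apply: eq_bigr => j _.
rewrite !mxE; case: (j \in J); rewrite ?mxE ?ord1; ring.
Qed.

Definition alpha (R : realType) m n (A : 'M[R]_(m, n)) := \sum_i \sum_j `|A i j|.

Lemma zbound (R : realType) m n (A : 'M[R]_(m, n)) (w : 'cV[R]_n) i :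
  `|(A *m w) i 0| <= alpha A * \sum_j `|w j 0|.
Proof.
rewrite mxE.
apply: le_trans (ler_norm_sum _ _ _) _.
apply: (@le_trans _ _ (\sum_j `|A i j| * \sum_l `|w l 0|)).
  apply: ler_sum => j _; rewrite normrM; apply: ler_wpM2l => //.
  by apply: (@term_le_sum _ _ (fun l => `|w l 0|)).
rewrite -mulr_suml; apply: ler_wpM2r; first by apply: sumr_ge0.
by apply: (@term_le_sum _ _ (fun i => \sum_j `|A i j|)) => l; apply: sumr_ge0.
Qed.

Lemma keyJ (R : realType) m n (A : 'M[R]_(m, n)) b (d : R) (J : {set 'I_n}) :
  0 <= d ->
  (forall x : 'cV[R]_n, enorm (A *m x - b) <= d -> ~ (forall i, i \notin J -> x i 0 = 0)) ->
  exists c : R, 0 < c /\ forall x : 'cV[R]_n, enorm (A *m x - b) <= d ->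
     c <= \sum_i (if i \in J then 0 else `|x i 0|).
Proof.
move=> d0 H.
have [c0 Hc0] := LS (fun j => if j \in J then col j A else 0) b.
set x0 := \col_j (if j \in J then c0 j else 0).
set D := nsq (\sum_j c0 j *: (if j \in J then col j A else 0) - b).
have hD : d ^+ 2 < D.
  rewrite ltNge; apply/negP => hle; apply: (H x0).
  - by rewrite enorm_nsq // /x0 mask_mul.
  - by move=> i /negbTE hi; rewrite /x0 mxE hi.
set eta := D - d ^+ 2.
set al := alpha A.
set M := \sum_(i < m) (1 : R).
have M0 : 0 <= M by apply: sumr_ge0.
have sc : forall C : R, \sum_(i < m) C = M * C.
  by move=> C; rewrite mulr_suml; under [RHS]eq_bigr do rewrite mul1r.
have al0 : 0 <= al by apply: sumr_ge0 => i _; apply: sumr_ge0.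
set beta := 2 * M * (1 + d ^+ 2) * al + M * al ^+ 2.
have beta0 : 0 <= beta.
  rewrite /beta; apply: addr_ge0; apply: mulr_ge0 => //; try apply: mulr_ge0 => //;
   try apply: mulr_ge0 => //; try exact: sqr_ge0.
  have := sqr_ge0 d; lra.
have eta0 : 0 < eta by rewrite /eta; lra.
exists (Num.min 1 (eta / (beta + 1))); split.
  rewrite lt_min ltr01 /=; apply: divr_gt0 => //; lra.
move=> x hx; rewrite enorm_nsq // in hx.
set w : 'cV[R]_n := \col_j (if j \in J then 0 else x j 0).
have -> : \sum_i (if i \in J then 0 else `|x i 0|) = \sum_j `|w j 0|.
  by apply: eq_bigr => i _; rewrite /w mxE; case: (i \in J); rewrite ?normr0.
set S := \sum_j `|w j 0|.
have S0 : 0 <= S by apply: sumr_ge0.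
set u := A *m x - b. rewrite -/u in hx.
set z := A *m w.
have e1 : \sum_j x j 0 *: (if j \in J then col j A else 0) - b = u + (-1) *: z.
  rewrite -mask_mul scaleN1r /u /z.
  have -> : \col_j (if j \in J then x j 0 else 0) = x - w.
    apply/matrixP => i k; rewrite !mxE ord1; case: (i \in J); ring.
  by rewrite mulmxBr addrAC.
have hDle : D <= nsq (u + (-1) *: z).
  rewrite -e1. match goal with |- ?g => idtac g end.  exact: (Hc0 (fun j => x j 0)).
rewrite /nsq nsq_expand in hDle. rewrite -/(nsq u) -/(nsq z) in hDle. match goal with H : _ |- _ => idtac H end.
have hu : forall i, `|u i 0| <= 1 + d ^+ 2.
  move=> i; have := entry_le u i; rewrite -(real_normK (num_real (u i 0))).
  have := normr_ge0 (u i 0); set a := `|u i 0|; move=> a0 ha.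
  have : a ^+ 2 <= d ^+ 2 by apply: le_trans hx.
  have := sqr_ge0 (a - 1). rewrite !expr2. nra.
have hz : forall i, `|z i 0| <= al * S by move=> i; apply: zbound.
have hdot : - dotv z u <= M * ((al * S) * (1 + d ^+ 2)).
  rewrite -sc /dotv -sumrN; apply: ler_sum => i _.
  apply: le_trans (ler_norm _) _; rewrite normrN normrM.
  by apply: ler_pM; rewrite ?normr_ge0 ?hz ?hu.
have hzz : nsq z <= M * (al * S) ^+ 2.
  rewrite -sc /nsq /dotv; apply: ler_sum => i _.
  rewrite -expr2 -(real_normK (num_real (z i 0))).
  have := hz i; have := normr_ge0 (z i 0); set a := `|z i 0|; move=> a0 ha.
  rewrite !expr2; apply: ler_pM => //.
rewrite leNgt; apply/negP; rewrite lt_min => /andP [S1 S2].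
rewrite ltr_pdivlMr in S2; last by lra.
have SS : S ^+ 2 <= S by rewrite expr2; have := ler_pM S0 S0 (ltW S1) (lexx S); rewrite mul1r.
have hq : M * (al * S) ^+ 2 <= M * al ^+ 2 * S.
  rewrite exprMn -mulrA; apply: ler_wpM2l => //; apply: ler_wpM2l => //; exact: sqr_ge0.
have hb : eta <= beta * S.
  rewrite /beta /eta.
  have : D <= nsq u + 2 * M * ((al * S) * (1 + d ^+ 2)) + M * al ^+ 2 * S.
    have := hDle; lra.
  move=> h; rewrite mulrDl. set T := M * al ^+ 2 * S.
  have -> : 2 * M * (1 + d ^+ 2) * al * S = 2 * M * ((al * S) * (1 + d ^+ 2)) by ring.
  rewrite -/T. move: h hx. rewrite /T. lra.
have : beta * S <= S * (beta + 1).
  rewrite mulrDr mulr1 mulrC; lra.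
lra.
Qed.


Lemma min_ex (P : nat -> Prop) k : P k -> exists k0, P k0 /\ forall j, (j < k0)%N -> ~ P j.
Proof.
elim/ltn_ind: k => k IH Pk.
case: (classic (exists j, (j < k)%N /\ P j)) => [[j [hj Pj]]|H].
  exact: (IH j hj Pj).
by exists k; split => // j hj Pj; apply: H; exists j.
Qed.

Lemma min_fin (R : realType) (T : finType) (P : T -> R -> Prop) :
  (forall t c c', 0 < c' -> c' <= c -> P t c -> P t c') ->
  (forall t, exists c, 0 < c /\ P t c) -> exists c, 0 < c /\ forall t, P t c.
Proof.
move=> Hd Hex.
suff [c [c0 Hc]] : exists c, 0 < c /\ forall t, t \in enum T -> P t c.
  by exists c; split => // t; apply: Hc; rewrite mem_enum.
elim: (enum T) => [|t s [c2 [c20 H2]]]; first by exists 1; split.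
have [c1 [c10 H1]] := Hex t.
exists (Num.min c1 c2); split; first by rewrite lt_min c10 c20.
move=> t'; rewrite inE => /orP [/eqP ->|ht].
  by apply: (Hd _ c1) => //; [rewrite lt_min c10 c20 | rewrite ge_min lexx].
by apply: (Hd _ c2); [rewrite lt_min c10 c20 | rewrite ge_min lexx orbT | exact: H2].
Qed.

Lemma card_ind (R : realType) n (J : {set 'I_n}) :
  \sum_i (if i \in J then 1 else 0 : R) = #|J|%:R.
Proof. by rewrite -big_mkcond /= sumr_const. Qed.

Lemma objpen_sum (R : realType) n (rho : R) (x v : 'cV[R]_n) :
  objpen rho x v = \sum_i (1 - v i 0 + rho * (v i 0 * `|x i 0|)).
Proof.
rewrite /objpen /obj0 /dotv /ones /absv mulr_sumr -big_split; apply: eq_bigr => i _.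
by rewrite !mxE /= mul1r.
Qed.

Lemma obj0_sum (R : realType) n (v : 'cV[R]_n) : obj0 v = \sum_i (1 - v i 0).
Proof. by rewrite /obj0 /dotv /ones; apply: eq_bigr => i _; rewrite !mxE mul1r. Qed.

Definition nzn (R : realType) n (x : 'cV[R]_n) := #|[set i | x i 0 != 0]|.

Unset Implicit Arguments. Set Strict Implicit.

Theorem theorem3p1 (R : realType) (m n : nat) (A : 'M[R]_(m, n))
  (b : 'cV[R]_m) (delta : R) :
  0 <= delta ->
  (exists x : 'cV[R]_n, enorm (A *m x - b) <= delta) ->
  exists rhobar : R, 0 < rhobar /\
    forall rho : R, rhobar < rho ->
      forall x v : 'cV[R]_n,
        Sstar A b delta x v <-> Sstar_rho A b delta rho x v.
Proof.
move=> d0 [x1 hx1].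
pose Pk k := exists x : 'cV[R]_n, enorm (A *m x - b) <= delta /\ (nzn x <= k)%N.
have Pn : Pk n.
  by exists x1; split => //; rewrite /nzn; apply: leq_trans (max_card _) _; rewrite card_ord.
have [K [[x0 [hx0 hnz0]] Kmin]] := min_ex Pn.
pose PJ := fun (J : {set 'I_n}) (c : R) => (#|J| < K)%N ->
    forall x : 'cV[R]_n, enorm (A *m x - b) <= delta ->
      c <= \sum_i (if i \in J then 0 else `|x i 0|).
have Hd : forall J c c', 0 < c' -> c' <= c -> PJ J c -> PJ J c'.
  move=> J c1 c' _ hc' H hJ x hx; exact: le_trans hc' (H hJ x hx).
have Hex : forall J, exists c, 0 < c /\ PJ J c.
  move=> J; case: (ltnP #|J| K) => hJ; last first.
    by exists 1; split => //; rewrite /PJ ltnNge hJ.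
  have [c1 [c10 H1]] : exists c : R, 0 < c /\ forall x : 'cV[R]_n, enorm (A *m x - b) <= delta ->
     c <= \sum_i (if i \in J then 0 else `|x i 0|).
    apply: keyJ => // x hx hsupp; apply: (Kmin _ hJ); exists x; split => //.
    rewrite /nzn; apply: subset_leq_card; apply/subsetP => i; rewrite inE.
    by apply: contraR => hi; apply/eqP; apply: hsupp.
  by exists c1; split => // _.
have [c [c0 Hc]] := min_fin Hd Hex.
exists ((K%:R + 1) / c); split; first by apply: divr_gt0 => //; rewrite ltr_pwDr ?ler0n.
move=> rho hrho.
have rhoc : K%:R + 1 < rho * c by rewrite -ltr_pdivrMr.
have rho0 : 0 < rho.
  have : 0 < (K%:R + 1) / c by apply: divr_gt0 => //; rewrite ltr_pwDr ?ler0n.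
  move=> h; exact: lt_trans h hrho.
have claimA : forall x v : 'cV[R]_n, feas A b delta x v ->
    K%:R <= objpen rho x v /\ (objpen rho x v <= K%:R -> dotv v (absv x) = 0).
  move=> x v [hx hv].
  set J := [set i | 1 < rho * `|x i 0|].
  pose diff := fun i : 'I_n => (1 - v i 0 + rho * (v i 0 * `|x i 0|)) - (if i \in J then 1 else 0).
  have hsum : objpen rho x v = #|J|%:R + \sum_i diff i.
    by rewrite objpen_sum -card_ind -big_split; apply: eq_bigr => i _; rewrite /diff /= addrC subrK.
  have hdiff0 : forall i, 0 <= diff i /\ (i \notin J -> rho * `|x i 0| <= diff i).
    move=> i; have /andP [v0 v1] := hv i.
    rewrite /diff; have -> : rho * (v i 0 * `|x i 0|) = v i 0 * (rho * `|x i 0|) by ring.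
    have := normr_ge0 (x i 0) => xa.
    have rx : 0 <= rho * `|x i 0| by apply: mulr_ge0 => //; exact: ltW.
    case hi: (i \in J); move: hi; rewrite inE => hi.
      split; [nra | by []].
    rewrite ltNge in hi; move/negbFE: hi => hi.
    split; [nra | move=> _; nra].
  have hs0 : 0 <= \sum_i diff i by apply: sumr_ge0 => i _; case: (hdiff0 i).
  have hJ0 : 0 <= #|J|%:R :> R by apply: ler0n.
  case: (ltnP #|J| K) => hJ.
    have hcS := Hc J hJ x hx.
    have : rho * c <= \sum_i diff i.
      apply: (@le_trans _ _ (\sum_i (if i \in J then 0 else rho * `|x i 0|))).
        have -> : \sum_i (if i \in J then 0 else rho * `|x i 0|) =
                  rho * \sum_i (if i \in J then 0 else `|x i 0|).
          by rewrite mulr_sumr; apply: eq_bigr => i _; case: (i \in J); rewrite ?mulr0.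
        by apply: ler_wpM2l => //; exact: ltW.
      apply: ler_sum => i _; case hi: (i \in J); first by case: (hdiff0 i).
      by case: (hdiff0 i) => _; apply; rewrite hi.
    rewrite hsum => h; split; first lra.
    lra.
  have hK : K%:R <= #|J|%:R :> R by rewrite ler_nat.
  split; first by rewrite hsum; lra.
  move=> hle.
  have hs : \sum_i diff i = 0 by move: hle; rewrite hsum; lra.
  have hz : forall i, diff i = 0.
    move=> i; apply: (psumr_eq0P (P := xpredT) (F := diff) _ hs) => // j _.
    by case: (hdiff0 j).
  rewrite /dotv; apply: big1 => i _; rewrite /absv mxE.
  have /andP [v0 v1] := hv i.
  have hd := hdiff0 i.
  have := hz i; rewrite /diff.
  case hi: (i \in J); move: hi hd; rewrite inE => hi hd h.
    have : v i 0 * (rho * `|x i 0| - 1) = 0 by move: h; rewrite /=; lra.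
    move/eqP; rewrite mulf_eq0 => /orP [/eqP -> | h2]; first by rewrite mul0r.
    by move: h2; rewrite subr_eq0 => /eqP h2; move: hi; rewrite h2 ltxx.
  have hd2 := hd.2; rewrite /diff inE hi in hd2; have := hd2 isT; rewrite h => h3.
  have -> : `|x i 0| = 0.
    apply/le_anti; rewrite normr_ge0 andbT.
    by rewrite -(pmulr_rle0 _ rho0).
  by rewrite mulr0.
set v0 : 'cV[R]_n := \col_i (if x0 i 0 == 0 then 1 else 0).
have feas0 : feas A b delta x0 v0.
  by split => // i; rewrite mxE; case: eqP => _; rewrite ?lexx ?ler01.
have comp0 : dotv v0 (absv x0) = 0.
  rewrite /dotv big1 // => i _; rewrite !mxE; case: eqP => [->|_].
    by rewrite normr0 mulr0.
  by rewrite mul0r.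
have ob0 : obj0 v0 <= K%:R.
  rewrite obj0_sum (_ : \sum_i _ = \sum_i (if i \in [set i | x0 i 0 != 0] then 1 else 0)).
    by rewrite card_ind ler_nat.
  apply: eq_bigr => i _; rewrite !mxE inE; case: eqP => _ /=.
    by rewrite subrr.
  by rewrite subr0.
have pen0 : objpen rho x0 v0 = obj0 v0 by rewrite /objpen comp0 mulr0 addr0.
split.
  case=> [[hf hc] hmin]; split; first exact: hf.
  move=> x' v' hf'.
  rewrite /objpen hc mulr0 addr0.
  have := hmin x0 v0 (conj feas0 comp0).
  have := (claimA x' v' hf').1.
  rewrite /objpen; lra.
case=> hf hmin.
have hle : objpen rho x v <= K%:R by apply: le_trans (hmin x0 v0 feas0) _; rewrite pen0.
have hc := (claimA x v hf).2 hle.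
split; first by split.
move=> x' v' [hf' hc'].
have := (claimA x' v' hf').1.
rewrite /objpen hc'; move: hle; rewrite /objpen hc.
rewrite !mulr0 !addr0; lra.
Qed.
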